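(* Let $T_1,T_2$ be equidistant trees with leaf set $X$ such that the tree topology of $T_1$ and the tree topology of $T_2$ differ by exactly one nearest neighbor interchange (NNI) move. Then every tree on the tropical line segment $\Gamma_{T_1,T_2}$ has the same tree topology as $T_1$ or as $T_2$, possibly with some branch lengths equal to $0$.
   Context: Max-plus arithmetic: $a\oplus b=\max\{a,b\}$, $a\odot b=a+b$; vectors in $\mathbb R^e$, $e=\binom{|X|}2$, coordinates indexed by pairs of leaves, considered modulo $\mathbb R\mathbf 1$. An equidistant tree is a rooted phylogenetic tree on leaf set $X$ with nonnegative edge lengths and all root-to-leaf distances equal; its ultrametric is its vector of pairwise leaf distances and determines the tree uniquely. $\Gamma_{T_1,T_2}$ is the set of trees whose ultrametrics are $a\odot u\oplus b\odot v$ ($a,b\in\mathbb R$), where $u,v$ are the ultrametrics of $T_1,T_2$. A clade is the set of leaves descending from a vertex. Two rooted tree topologies differ by one NNI move if there are pairwise disjoint nonempty leaf sets $X_1,X_2,X_3\subseteq X$ such that $X_1\cup X_2\cup X_3$ and each $X_i$ are clades in both trees, the two trees agree on the topology of each clade $X_i$ and on the topology outside the clade $X_1\cup X_2\cup X_3$, and inside the clade $X_1\cup X_2\cup X_3$ one tree has the form $((X_1,X_3),X_2)$ while the other has the form $((X_1,X_2),X_3)$ or $(X_1,(X_2,X_3))$ (i.e., the two trees group different pairs among $X_1,X_2,X_3$ into a clade). ''Same tree topology with possible $0$ branch lengths'' means the topology is that of $T_1$ or $T_2$ with some edges possibly having length zero (i.e., contracted). *)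

(* Defs.v *)
From HB Require Import structures.
From mathcomp Require Import all_boot all_order all_algebra.
Set Implicit Arguments. Unset Strict Implicit. Unset Printing Implicit Defensive.
Import Order.TTheory GRing.Theory Num.Theory.
Local Open Scope ring_scope.

Section Trees.
Variable X : finType.

(* A rooted tree topology on leaf set X, encoded by its set of clades
   (a hierarchy): nonempty clades, X and all singletons are clades, and
   any two clades are nested or disjoint. *)
Definition hierarchy (H : {set {set X}}) : Prop :=
  [/\ forall A, A \in H -> A != set0,
      [set: X] \in H,
      forall x : X, [set x] \in H &
      forall A B, A \in H -> B \in H ->
        [\/ A \subset B, B \subset A | [disjoint A & B]]].

Definition lca (H : {set {set X}}) (x y : X) : {set X} :=
  \bigcap_(A in H | (x \in A) && (y \in A)) A.

(* Inside the clade Y = X1 u X2 u X3, the tree has the form ((P,Q),S)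
   with P u Q the only clade strictly between the X_i and Y. *)
Definition grouped (H : {set {set X}}) (X1 X2 X3 P : {set X}) : Prop :=
  P \in H /\
  forall A, A \in H -> A \subset X1 :|: X2 :|: X3 ->
     ~~ [|| A \subset X1, A \subset X2 | A \subset X3] ->
     A = X1 :|: X2 :|: X3 \/ A = P.

Definition nni (H1 H2 : {set {set X}}) : Prop :=
  exists X1 X2 X3 : {set X},
    let Y := X1 :|: X2 :|: X3 in
    [/\ [/\ X1 != set0, X2 != set0 & X3 != set0],
        [/\ [disjoint X1 & X2], [disjoint X1 & X3] & [disjoint X2 & X3]],
        [/\ X1 \in H1 :&: H2, X2 \in H1 :&: H2, X3 \in H1 :&: H2
          & Y \in H1 :&: H2],
        (forall A : {set X}, [|| A \subset X1, A \subset X2 | A \subset X3] ->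
            (A \in H1) = (A \in H2)) /\
        (forall A : {set X}, [disjoint A & Y] || (Y \subset A) ->
            (A \in H1) = (A \in H2)) &
        ((grouped H1 X1 X2 X3 (X1 :|: X3) /\
           (grouped H2 X1 X2 X3 (X1 :|: X2) \/ grouped H2 X1 X2 X3 (X2 :|: X3)))
        \/
        (grouped H2 X1 X2 X3 (X1 :|: X3) /\
           (grouped H1 X1 X2 X3 (X1 :|: X2) \/ grouped H1 X1 X2 X3 (X2 :|: X3))))].

Variable R : realFieldType.

(* An equidistant tree: a topology together with vertex heights (distance
   from the leaves); leaves have height 0 and heights weakly increase towards
   the root, i.e. all edge lengths (height differences) are >= 0. *)
Record eqtree := EqTree {
  topo : {set {set X}};
  height : {set X} -> R;
  topo_hier : hierarchy topo;
  height_leaf : forall x : X, height [set x] = 0;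
  height_mono : forall A B, A \in topo -> B \in topo -> A \subset B ->
                  height A <= height B }.

Definition dist (T : eqtree) (x y : X) : R := 2 * height T (lca (topo T) x y).

End Trees.

(* Main.v *)
Require Import Defs.
From HB Require Import structures.
From mathcomp Require Import all_boot all_order all_algebra.
Import Order.TTheory GRing.Theory Num.Theory.
Local Open Scope ring_scope.

Module Aux.
Set Implicit Arguments. Unset Strict Implicit.

Section L.
Variable X : finType.
Implicit Types H : {set {set X}}.

Lemma lca_sub H x y A : A \in H -> x \in A -> y \in A -> lca H x y \subset A.
Proof. by move=> AH xA yA; apply: bigcap_inf; rewrite AH xA yA. Qed.

Lemma lca_memx H x y : x \in lca H x y.
Proof. by apply/bigcapP => A /andP[_ /andP[]]. Qed.
Lemma lca_memy H x y : y \in lca H x y.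
Proof. by apply/bigcapP => A /andP[_ /andP[]]. Qed.

Lemma lca_in H x y : hierarchy H -> lca H x y \in H.
Proof.
case=> _ HT _ Hn.
have P0 : (setT \in H) && (x \in [set: X]) && (y \in [set: X]) by rewrite HT !inE.
case: (@arg_minnP _ setT (fun A : {set X} => (A \in H) && (x \in A) && (y \in A)) (fun A : {set X} => #|A|) P0) => A0 /andP[/andP[A0H xA] yA] Amin.
suff -> : lca H x y = A0 by [].
apply/eqP; rewrite eqEsubset lca_sub //=.
apply/bigcapsP => B /andP[BH /andP[xB yB]].
case: (Hn _ _ A0H BH) => // [BA|].
  have := Amin B; rewrite BH xB yB => /(_ isT) cle.
  by rewrite -(geq_leqif (subset_leqif_card BA)).
by move/disjointFr => /(_ _ xA); rewrite xB.
Qed.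
End L.

Section C.
Variable X : finType.
Implicit Types H : {set {set X}}.

Lemma core H H' (X1 X2 X3 P P' : {set X}) :
  hierarchy H -> hierarchy H' ->
  X1 \in H' -> X2 \in H' -> X3 \in H' ->
  X1 :|: X2 :|: X3 \in H -> X1 :|: X2 :|: X3 \in H' ->
  (forall A : {set X}, [|| A \subset X1, A \subset X2 | A \subset X3] ->
            (A \in H) = (A \in H')) ->
  (forall A : {set X}, [disjoint A & X1 :|: X2 :|: X3] || (X1 :|: X2 :|: X3 \subset A) ->
            (A \in H) = (A \in H')) ->
  grouped H X1 X2 X3 P -> grouped H' X1 X2 X3 P' ->
  (forall x y, x \in P -> y \in P -> x \in P' -> y \in P' ->
     [|| (x \in X1) && (y \in X1), (x \in X2) && (y \in X2) | (x \in X3) && (y \in X3)]) ->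
  forall x y, lca H x y \subset lca H' x y \/ lca H x y = X1 :|: X2 :|: X3.
Proof.
move=> hH hH' X1H X2H X3H YH YH' agI agO [PH gH] [PH' gH'] hPP x y.
set Y := X1 :|: X2 :|: X3 in YH YH' agO gH gH' *.
set L := lca H x y; set L' := lca H' x y.
have LH : L \in H by apply: lca_in.
have LH' : L' \in H' by apply: lca_in.
have xL := lca_memx H x y; have yL := lca_memy H x y.
have xL' := lca_memx H' x y; have yL' := lca_memy H' x y.
case: (boolP [|| (x \in X1) && (y \in X1), (x \in X2) && (y \in X2) | (x \in X3) && (y \in X3)]) => same.
  left; apply: lca_sub => //; rewrite agI //.
  by case/or3P: same => /andP[xi yi]; apply/or3P;
    [apply: Or31 | apply: Or32 | apply: Or33]; exact: lca_sub.
case: hH' => _ _ _ /(_ _ _ LH' YH') [L'Y | YL' | dL'].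
  have xY : x \in Y := subsetP L'Y x xL'.
  have yY : y \in Y := subsetP L'Y y yL'.
  have LY : L \subset Y := lca_sub YH xY yY.
  have nsub : forall A : {set X}, x \in A -> y \in A -> ~~ [|| A \subset X1, A \subset X2 | A \subset X3].
    move=> A xA yA; apply/negP; case/or3P => /subsetP s;
    by move: same; rewrite (s _ xA) (s _ yA) /= ?orbT.
  case: (gH L LH LY (nsub L xL yL)) => [->|LP]; first by right.
  case: (gH' L' LH' L'Y (nsub L' xL' yL')) => [L'Y'|L'P].
    by left; rewrite L'Y'.
  have := hPP x y; rewrite -LP -L'P xL yL xL' yL' => /(_ isT isT isT isT) h.
  by move: same; rewrite h.
 by left; apply: lca_sub => //; rewrite agO // YL' orbT.
by left; apply: lca_sub => //; rewrite agO // dL'.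
Qed.
End C.

Section R.
Variable X : finType.
Variable R : realFieldType.

Lemma height_ge0 (T : eqtree X R) A x : A \in topo T -> x \in A -> 0 <= height T A.
Proof.
move=> AT xA; rewrite -(height_leaf T x); apply: height_mono => //.
  by case: (topo_hier T).
by rewrite sub1set.
Qed.

Lemma distD (T : eqtree X R) A x y : A \in topo T -> x \in A -> y \in A ->
  dist T x y <= 2 * height T A.
Proof.
move=> AT xA yA; rewrite /dist ler_wpM2l //; apply: height_mono => //.
  exact: lca_in (topo_hier T).
exact: lca_sub.
Qed.

Lemma dist_ge0 (T : eqtree X R) x y : 0 <= dist T x y.
Proof.
rewrite /dist mulr_ge0 //; apply: (@height_ge0 _ _ x).
  exact: lca_in (topo_hier T).
exact: lca_memx.
Qed.

Lemma build (T T' : eqtree X R) a b :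
 (forall x y x' y', x != y -> x' \in lca (topo T) x y -> y' \in lca (topo T) x y ->
    b + dist T' x' y' <= Num.max (a + dist T x y) (b + dist T' x y)) ->
 exists T0 : eqtree X R, topo T0 = topo T /\ exists c : R, forall x y, x != y ->
    dist T0 x y = Num.max (a + dist T x y) (b + dist T' x y) + c.
Proof.
move=> hyp.
pose w x y := Num.max (a + dist T x y) (b + dist T' x y) - a.
have w0 : forall x y, 0 <= w x y.
  move=> x y; rewrite /w subr_ge0 le_max; apply/orP; left.
  by rewrite lerDl dist_ge0.
pose M (A : {set X}) := \big[Num.max/0]_(p : X * X | (p.1 \in A) && (p.2 \in A) && (p.1 != p.2)) w p.1 p.2.
have Mmono : forall A B : {set X}, A \subset B -> M A <= M B.
  move=> A B AB; apply/bigmax_leP; split; first exact: bigmax_ge_id.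
  move=> p /andP[/andP[p1 p2] pn]; apply: (@le_bigmax_cond _ _ _ 0 p _ (fun q : X * X => w q.1 q.2)).
  by rewrite (subsetP AB _ p1) (subsetP AB _ p2).
have leaf : forall x : X, M [set x] / 2 = 0.
  move=> x; rewrite /M big_pred0 ?mul0r // => p /=.
  by apply/negP => /andP[/andP]; rewrite !inE => -[/eqP -> /eqP ->]; rewrite eqxx.
have mono : forall A B, A \in topo T -> B \in topo T -> A \subset B -> M A / 2 <= M B / 2.
  by move=> A B _ _ AB; rewrite ler_wpM2r ?invr_ge0 ?Mmono.
exists (@EqTree X R (topo T) (fun A => M A / 2) (topo_hier T) leaf mono); split => //.
exists (- a) => x y nxy; rewrite /dist /= mulrC -mulrA mulVf ?pnatr_eq0 // mulr1.
set L := lca (topo T) x y.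
apply: le_anti; apply/andP; split.
  apply/bigmax_leP; split; first exact: w0.
  move=> p /andP[/andP[p1 p2] pn]; rewrite /w lerD2r ge_max; apply/andP; split.
    rewrite le_max lerD2l; apply/orP; left; apply: distD => //.
    exact: lca_in (topo_hier T).
  exact: hyp.
have: w (x, y).1 (x, y).2 <= M L.
  by apply: (@le_bigmax_cond _ _ _ 0 (x, y) _ (fun q : X * X => w q.1 q.2)); rewrite /= nxy lca_memx lca_memy.
by [].
Qed.

Lemma compat (T T' : eqtree X R) a b Y : Y \in topo T -> Y \in topo T' ->
  b + 2 * height T' Y <= a + 2 * height T Y ->
  (forall x y, lca (topo T) x y \subset lca (topo T') x y \/ lca (topo T) x y = Y) ->
  (forall x y x' y', x != y -> x' \in lca (topo T) x y -> y' \in lca (topo T) x y ->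
    b + dist T' x' y' <= Num.max (a + dist T x y) (b + dist T' x y)).
Proof.
move=> YT YT' hY hc x y x' y' nxy x'L y'L.
case: (hc x y) => [s|e].
  rewrite le_max lerD2l; apply/orP; right; apply: distD.
  - exact: lca_in (topo_hier T').
  - exact: subsetP s _ x'L.
  - exact: subsetP s _ y'L.
rewrite le_max; apply/orP; left; apply: (le_trans _ (le_trans hY _)).
  rewrite lerD2l; apply: distD => //; by rewrite -e.
by rewrite /dist e.
Qed.
End R.
End Aux.
Import Aux.
Theorem theorem6 (X : finType) (R : realFieldType) (T1 T2 : eqtree X R) :
  nni (topo T1) (topo T2) ->
  forall a b : R,
    exists T : eqtree X R,
      (topo T = topo T1 \/ topo T = topo T2) /\
      exists c : R, forall x y : X, x != y ->
        dist T x y = Num.max (a + dist T1 x y) (b + dist T2 x y) + c.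
Proof.
move=> [X1 [X2 [X3 /= [_ [d12 d13 d23] [m1 m2 m3 mY] [agI agO] G]]]] a b.
move: m1 m2 m3 mY; rewrite !inE => /andP[m11 m12] /andP[m21 m22] /andP[m31 m32] /andP[mY1 mY2].
set Y := X1 :|: X2 :|: X3 in mY1 mY2 agO G *.
have D : forall (A B : {set X}) z, [disjoint A & B] -> z \in A -> z \in B -> False.
  by move=> A B z /disjointFr h zA; rewrite h.
have p1 : forall z, z \in X1 :|: X3 -> z \in X1 :|: X2 -> (z \in X1).
  move=> z; rewrite !inE => /orP[] // z3 /orP[] // z2.
  by case: (D _ _ _ d23 z2 z3).
have p3 : forall z, z \in X1 :|: X3 -> z \in X2 :|: X3 -> (z \in X3).
  move=> z; rewrite !inE => /orP[] // z1 /orP[] // z2.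
  by case: (D _ _ _ d12 z1 z2).
have hA : forall x y, x \in X1 :|: X3 -> y \in X1 :|: X3 -> x \in X1 :|: X2 -> y \in X1 :|: X2 ->
     [|| (x \in X1) && (y \in X1), (x \in X2) && (y \in X2) | (x \in X3) && (y \in X3)].
  by move=> x y xa ya xb yb; rewrite (p1 _ xa xb) (p1 _ ya yb).
have hB : forall x y, x \in X1 :|: X3 -> y \in X1 :|: X3 -> x \in X2 :|: X3 -> y \in X2 :|: X3 ->
     [|| (x \in X1) && (y \in X1), (x \in X2) && (y \in X2) | (x \in X3) && (y \in X3)].
  by move=> x y xa ya xb yb; rewrite (p3 _ xa xb) (p3 _ ya yb) !orbT.
have agI' : forall A : {set X}, [|| A \subset X1, A \subset X2 | A \subset X3] ->
            (A \in topo T2) = (A \in topo T1) by move=> A h; rewrite agI.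
have agO' : forall A : {set X}, [disjoint A & Y] || (Y \subset A) ->
            (A \in topo T2) = (A \in topo T1) by move=> A h; rewrite agO.
have h1 := topo_hier T1; have h2 := topo_hier T2.
have [hc12 hc21] : (forall x y, lca (topo T1) x y \subset lca (topo T2) x y \/ lca (topo T1) x y = Y) /\
                   (forall x y, lca (topo T2) x y \subset lca (topo T1) x y \/ lca (topo T2) x y = Y).
  case: G => [[g1 [g2|g2]]|[g2 [g1|g1]]]; split.
  - exact: (core h1 h2 m12 m22 m32 mY1 mY2 agI agO g1 g2 hA).
  - exact: (core h2 h1 m11 m21 m31 mY2 mY1 agI' agO' g2 g1 (fun x y a b c d => hA x y c d a b)).
  - exact: (core h1 h2 m12 m22 m32 mY1 mY2 agI agO g1 g2 hB).
  - exact: (core h2 h1 m11 m21 m31 mY2 mY1 agI' agO' g2 g1 (fun x y a b c d => hB x y c d a b)).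
  - exact: (core h1 h2 m12 m22 m32 mY1 mY2 agI agO g1 g2 (fun x y a b c d => hA x y c d a b)).
  - exact: (core h2 h1 m11 m21 m31 mY2 mY1 agI' agO' g2 g1 hA).
  - exact: (core h1 h2 m12 m22 m32 mY1 mY2 agI agO g1 g2 (fun x y a b c d => hB x y c d a b)).
  - exact: (core h2 h1 m11 m21 m31 mY2 mY1 agI' agO' g2 g1 hB).
case: (leP (b + 2 * height T2 Y) (a + 2 * height T1 Y)) => hY.
  have [T0 [e [c hc]]] := build (compat mY1 mY2 hY hc12).
  by exists T0; split; [left | exists c].
have [T0 [e [c hc]]] := build (compat mY2 mY1 (ltW hY) hc21).
exists T0; split; [right | exists c] => // x y nxy.
by rewrite hc // maxC.
Qed.
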